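(* Let $n$ be even and let $N$ be a $4$-net of order $n$ with parallel classes $\Pi_0,\dots,\Pi_3$ and a relation $\mathcal R$ of type $(\lambda_0,\dots,\lambda_3)$. Put $g_i=\frac n2-\lambda_i$. Then for every $\mathbf b=(b_0,\dots,b_3)\in\{0,1\}^4$ with an even number of ones, $$t_{\mathbf b}=\frac18 n^2+\frac14 n\sum_{i=0}^{3}(-1)^{b_i}g_i+\frac14\sum_{0\le i<j\le 3}(-1)^{b_i+b_j}g_ig_j .$$
   Context: A $k$-net of order $n$ is a set $P$ of $n^2$ points together with a set $L$ of $kn$ lines (subsets of $P$), each line containing $n$ points and each point lying on $k$ lines, such that $L$ partitions into $k$ parallel classes $\Pi_0,\dots,\Pi_{k-1}$ of $n$ pairwise disjoint lines each, and any two lines from different parallel classes meet in exactly one point. A relation on a net is a set $\mathcal R\subseteq L$ such that every point lies on an even number of lines of $\mathcal R$. Its type is $(\lambda_0,\dots,\lambda_{k-1})$ with $\lambda_i=|\mathcal R\cap\Pi_i|$. The type of a point $p$ is the binary string $\mathbf b\in\{0,1\}^k$ with $b_i=1$ iff the line of $\Pi_i$ through $p$ lies in $\mathcal R$; $t_{\mathbf b}$ is the number of points of type $\mathbf b$. *)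

(* Defs.v *)
From mathcomp Require Import all_boot all_order all_algebra.
Set Implicit Arguments. Unset Strict Implicit. Unset Printing Implicit Defensive.

Definition is_net (P L : finType) (k n : nat)
    (pts : L -> {set P}) (cls : L -> 'I_k) : Prop :=
  #|P| = (n ^ 2)%N /\
      injective pts /\
      (forall i : 'I_k, #|[set l | cls l == i]| = n) /\
      (forall l : L, #|pts l| = n) /\
      (forall p : P, #|[set l | p \in pts l]| = k) /\
      (forall l l' : L, cls l = cls l' -> l != l' ->
          [disjoint pts l & pts l']) /\
    (forall l l' : L, cls l != cls l' ->
          #|pts l :&: pts l'| = 1%N).

Definition is_relation (P L : finType) (pts : L -> {set P}) (R : {set L}) : Prop :=
  forall p : P, ~~ odd #|[set l in R | p \in pts l]|.

Definition rel_type (L : finType) (k : nat) (cls : L -> 'I_k) (R : {set L}) (i : 'I_k) : nat :=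
  #|[set l in R | cls l == i]|.

Definition point_type (P L : finType) (k : nat) (pts : L -> {set P}) (cls : L -> 'I_k)
    (R : {set L}) (p : P) (i : 'I_k) : bool :=
  [exists l, [&& l \in R, cls l == i & p \in pts l]].

Definition t_count (P L : finType) (k : nat) (pts : L -> {set P}) (cls : L -> 'I_k)
    (R : {set L}) (b : 'I_k -> bool) : nat :=
  #|[set p : P | [forall i, point_type pts cls R p i == b i]]|.

(* Main.v *)
Require Import Defs.
From mathcomp Require Import all_boot all_order all_algebra ring.
Import GRing.Theory Num.Theory.
Local Open Scope ring_scope.
Lemma ptid8 (a0 a1 a2 a3 b0 b1 b2 b3 : bool) :
  ~~ odd (a0 + a1 + a2 + a3)%N -> ~~ odd (b0 + b1 + b2 + b3)%N ->
  ((16 * [&& a0 == b0, a1 == b1, a2 == b2 & a3 == b3])%N%:R : rat) =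
  2 + 2 * ((-1)^+ b0 * (-1)^+ a0 + (-1)^+ b1 * (-1)^+ a1 + (-1)^+ b2 * (-1)^+ a2 + (-1)^+ b3 * (-1)^+ a3)
  + ((-1)^+ b0 * (-1)^+ b1 * ((-1)^+ a0 * (-1)^+ a1) + (-1)^+ b0 * (-1)^+ b2 * ((-1)^+ a0 * (-1)^+ a2) + (-1)^+ b0 * (-1)^+ b3 * ((-1)^+ a0 * (-1)^+ a3)
     + (-1)^+ b1 * (-1)^+ b2 * ((-1)^+ a1 * (-1)^+ a2) + (-1)^+ b1 * (-1)^+ b3 * ((-1)^+ a1 * (-1)^+ a3) + (-1)^+ b2 * (-1)^+ b3 * ((-1)^+ a2 * (-1)^+ a3)).
Proof. by case: a0; case: a1; case: a2; case: a3; case: b0; case: b1; case: b2; case: b3. Qed.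

Lemma sum4 (V : nmodType) (F : 'I_4 -> V) :
  \sum_(i < 4) F i = F (inord 0) + F (inord 1) + F (inord 2) + F (inord 3).
Proof.
rewrite !big_ord_recl big_ord0 addr0 !addrA.
by congr (_ + _ + _ + _); congr F; apply/val_inj; rewrite /= inordK.
Qed.

Lemma sum4N (F : 'I_4 -> nat) :
  (\sum_(i < 4) F i = F (inord 0) + F (inord 1) + F (inord 2) + F (inord 3))%N.
Proof.
rewrite !big_ord_recl big_ord0 addn0 !addnA.
by congr (_ + _ + _ + _)%N; congr F; apply/val_inj; rewrite /= inordK.
Qed.

Lemma pair4 (V : nmodType) (F : 'I_4 -> 'I_4 -> V) :
  \sum_(i < 4) \sum_(j < 4 | (i < j)%N) F i j =
  F (inord 0) (inord 1) + F (inord 0) (inord 2) + F (inord 0) (inord 3)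
  + F (inord 1) (inord 2) + F (inord 1) (inord 3) + F (inord 2) (inord 3).
Proof.
have E (i : 'I_4) : \sum_(j < 4 | (i < j)%N) F i j = \sum_(j < 4) if (i < j)%N then F i j else 0.
  by rewrite big_mkcond.
by rewrite sum4 !E !sum4 !inordK //= !add0r !addr0 !addrA.
Qed.

Lemma forall4 (P : pred 'I_4) :
  [forall i, P i] = [&& P (inord 0), P (inord 1), P (inord 2) & P (inord 3)].
Proof.
apply/forallP/and4P => [H|[h0 h1 h2 h3] [m hm]]; first by split; apply: H.
rewrite -(inord_val (Ordinal hm)) /=; move: hm.
by case: m => [|[|[|[|m]]]].
Qed.

Lemma cardS_sum (T : finType) (A : {set T}) : (\sum_(p : T) (p \in A : nat))%N = #|A|.
Proof. by rewrite -sum1_card [RHS]big_mkcond /=; apply: eq_bigr => p _; case: (p \in A). Qed.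

Lemma pt_sum (P L : finType) (pts : L -> {set P}) (cls : L -> 'I_4) (R : {set L})
  (Hdisj : forall l l' : L, cls l = cls l' -> l != l' -> [disjoint pts l & pts l'])
  p i : (point_type pts cls R p i : nat) =
        (\sum_(l in [set l in R | cls l == i]) (p \in pts l : nat))%N.
Proof.
case: (boolP (point_type pts cls R p i)) => H.
- move: (H); rewrite /point_type => /existsP [l0 /and3P [l0R /eqP l0c pl0]].
  rewrite (bigD1 l0) /=; last by rewrite inE l0R l0c eqxx.
  rewrite pl0 big1 // => l /andP []; rewrite inE => /andP [lR /eqP lc] nl.
  apply/eqP; rewrite eqb0; apply/negP => pl.
  have hc : cls l = cls l0 by rewrite lc l0c.
  have := Hdisj l l0 hc nl.
  move/disjoint_setI0/setP/(_ p); by rewrite !inE pl pl0.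
- rewrite big1 // => l; rewrite inE => /andP [lR lc].
  apply/eqP; rewrite eqb0; apply: contra H => pl; apply/existsP; exists l.
  by rewrite lR lc pl.
Qed.

Lemma F1 (P L : finType) (n : nat) (pts : L -> {set P}) (cls : L -> 'I_4) (R : {set L})
  (Hdisj : forall l l' : L, cls l = cls l' -> l != l' -> [disjoint pts l & pts l'])
  (Hline : forall l, #|pts l| = n) i :
  (\sum_p (point_type pts cls R p i : nat) = n * rel_type cls R i)%N.
Proof.
under eq_bigr do rewrite (@pt_sum _ _ _ _ _ Hdisj).
rewrite exchange_big /=.
under eq_bigr do rewrite cardS_sum Hline.
by rewrite sum_nat_const mulnC.
Qed.

Lemma F2 (P L : finType) (pts : L -> {set P}) (cls : L -> 'I_4) (R : {set L})
  (Hdisj : forall l l' : L, cls l = cls l' -> l != l' -> [disjoint pts l & pts l'])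
  (Hmeet : forall l l' : L, cls l != cls l' -> #|pts l :&: pts l'| = 1%N) i j :
  i != j ->
  (\sum_p (point_type pts cls R p i && point_type pts cls R p j : nat)
     = rel_type cls R i * rel_type cls R j)%N.
Proof.
move=> nij.
transitivity (\sum_p \sum_(l in [set l in R | cls l == i])
                \sum_(l' in [set l in R | cls l == j]) (p \in pts l : nat) * (p \in pts l' : nat))%N.
  apply: eq_bigr => p _; rewrite -mulnb !(@pt_sum _ _ _ _ _ Hdisj) big_distrl /=.
  by apply: eq_bigr => l _; rewrite big_distrr.
rewrite exchange_big /=.
transitivity (\sum_(l in [set l in R | cls l == i])
                \sum_(l' in [set l in R | cls l == j]) 1)%N.
  apply: eq_bigr => l; rewrite inE => /andP [_ /eqP lc].
  rewrite exchange_big /=; apply: eq_bigr => l'; rewrite inE => /andP [_ /eqP l'c].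
  rewrite -(Hmeet l l'); last by rewrite lc l'c.
  rewrite -cardS_sum; apply: eq_bigr => p _; by rewrite inE mulnb.
rewrite /rel_type; under eq_bigr do rewrite sum_nat_const muln1.
by rewrite sum_nat_const mulnC.
Qed.

Lemma F3 (P L : finType) (pts : L -> {set P}) (cls : L -> 'I_4) (R : {set L})
  (Hdisj : forall l l' : L, cls l = cls l' -> l != l' -> [disjoint pts l & pts l'])
  (HR : is_relation pts R) p :
  ~~ odd (\sum_(i < 4) (point_type pts cls R p i : nat)).
Proof.
under eq_bigr do rewrite (@pt_sum _ _ _ _ _ Hdisj).
have -> : (\sum_(i < 4) \sum_(l in [set l in R | cls l == i]) (p \in pts l : nat) =
   \sum_(i < 4) \sum_(l | (l \in R) && (cls l == i)) (p \in pts l : nat))%N.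
  by apply: eq_bigr => i _; apply: eq_bigl => l; rewrite inE.
rewrite -(partition_big (P := fun l => l \in R) cls xpredT) //.
rewrite big_mkcond /=.
have -> : (\sum_l (if l \in R then (p \in pts l : nat) else 0) =
           \sum_l (l \in [set l in R | p \in pts l] : nat))%N.
  by apply: eq_bigr => l _; rewrite inE; case: (l \in R).
by rewrite cardS_sum; apply: HR.
Qed.

Lemma sgn_nat (a : bool) : ((-1) ^+ a : rat) = 1 - 2 * (a : nat)%:R.
Proof. by case: a. Qed.

Lemma sgn2_nat (a c : bool) : ((-1) ^+ a * (-1) ^+ c : rat) =
   1 - 2 * (a : nat)%:R - 2 * (c : nat)%:R + 4 * ((a && c) : nat)%:R.
Proof. by case: a; case: c. Qed.

Theorem mainTheorem3 (P L : finType) (n : nat) (pts : L -> {set P}) (cls : L -> 'I_4)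
    (R : {set L}) :
  ~~ odd n ->
  is_net n pts cls ->
  is_relation pts R ->
  let g := fun i : 'I_4 => (n%:R / 2 - (rel_type cls R i)%:R : rat) in
  forall b : 'I_4 -> bool,
    ~~ odd #|[set i | b i]| ->
    ((t_count pts cls R b)%:R : rat) =
      (n%:R ^+ 2) / 8
      + n%:R / 4 * (\sum_(i < 4) (-1) ^+ b i * g i)
      + 1 / 4 * (\sum_(i < 4) \sum_(j < 4 | (i < j)%N) (-1) ^+ (b i + b j)%N * g i * g j).
Proof.
move=> evn [HP [_ [_ [Hline [_ [Hdisj Hmeet]]]]]] HR g b evb.
have Ht : (t_count pts cls R b = \sum_p [forall i, point_type pts cls R p i == b i])%N.
  by rewrite /t_count -cardS_sum; apply: eq_bigr => p _; rewrite inE.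
have Hb : ~~ odd (b (inord 0) + b (inord 1) + b (inord 2) + b (inord 3))%N.
  by move: evb; rewrite -cardS_sum sum4N !inE.
have H3 (p : P) : ~~ odd (point_type pts cls R p (inord 0) + point_type pts cls R p (inord 1)
     + point_type pts cls R p (inord 2) + point_type pts cls R p (inord 3))%N.
  by have := @F3 _ _ _ _ _ Hdisj HR p; rewrite sum4N.
have Hpt (p : P) := @ptid8 _ _ _ _ _ _ _ _ (H3 p) Hb.
have M1 k : \sum_p ((-1) ^+ point_type pts cls R p k : rat) =
    (n%:R) ^+ 2 - 2 * n%:R * (rel_type cls R k)%:R.
  under eq_bigr do rewrite sgn_nat.
  rewrite sumrB sumr_const -mulr_sumr -natr_sum (@F1 _ _ _ _ _ _ Hdisj Hline) HP.
  by rewrite natrM natrX mulrA.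
have M2 k l : k != l -> \sum_p ((-1) ^+ point_type pts cls R p k * (-1) ^+ point_type pts cls R p l : rat) =
    (n%:R) ^+ 2 - 2 * n%:R * (rel_type cls R k)%:R - 2 * n%:R * (rel_type cls R l)%:R
    + 4 * (rel_type cls R k)%:R * (rel_type cls R l)%:R.
  move=> nkl; under eq_bigr do rewrite sgn2_nat.
  rewrite big_split !sumrB sumr_const -!mulr_sumr -!natr_sum (@F1 _ _ _ _ _ _ Hdisj Hline) (@F1 _ _ _ _ _ _ Hdisj Hline).
  rewrite (@F2 _ _ _ _ _ Hdisj Hmeet _ _ nkl) HP.
  rewrite /= natrX !natrM; ring.
have ne k l : (k < 4)%N -> (l < 4)%N -> k != l -> (inord k : 'I_4) != inord l.
  move=> hk hl nkl; apply/eqP => /(congr1 val); rewrite /= !inordK //.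
  by apply/eqP.
apply: (@mulfI _ 16) => //.
have -> : 16 * ((t_count pts cls R b)%:R : rat) =
   \sum_p ((16 * [forall i, point_type pts cls R p i == b i])%N%:R : rat).
  by rewrite Ht natr_sum mulr_sumr; apply: eq_bigr => p _; rewrite natrM.
under eq_bigr do rewrite forall4 Hpt.
rewrite !big_split /= -!mulr_sumr !big_split /= -!mulr_sumr !sumr_const.
rewrite (_ : #|_| = (n ^ 2)%N); last by rewrite -HP.
have n01 : (inord 0 : 'I_4) != inord 1 by apply: ne.
have n02 : (inord 0 : 'I_4) != inord 2 by apply: ne.
have n03 : (inord 0 : 'I_4) != inord 3 by apply: ne.
have n12 : (inord 1 : 'I_4) != inord 2 by apply: ne.
have n13 : (inord 1 : 'I_4) != inord 3 by apply: ne.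
have n23 : (inord 2 : 'I_4) != inord 3 by apply: ne.
rewrite !M1 !M2 // natrX.
rewrite sum4 pair4 /g !exprD.
by field.
Qed.
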